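(* Under the same patch setup as below, fix an order $P\ge1$ and $0<r\le1$, and define edge values by the Lagrangian interpolation $$u^I_{n+1}=u^I_1+\sum_{k=1}^{P}\Big(\prod_{\ell=0}^{k-1}(r^2-\ell^2)\Big)\frac{(2k/r)\,\mu\delta^{2k-1}+\delta^{2k}}{(2k)!}\,u^I_1,\qquad u^I_{0}=u^I_n+\sum_{k=1}^{P}\Big(\prod_{\ell=0}^{k-1}(r^2-\ell^2)\Big)\frac{-(2k/r)\,\mu\delta^{2k-1}+\delta^{2k}}{(2k)!}\,u^I_n .$$ Writing these as $u^I_{n+1}=\sum_J\mathcal I^{IJ}_{n1}u^J_1$ and $u^I_0=\sum_J\mathcal I^{IJ}_{1n}u^J_n$, the coefficients are real and satisfy $\mathcal I^{IJ}_{n1}=\mathcal I^{JI}_{1n}$ for all $I,J$; consequently, for every $P$, the linear system $\partial_t\mathbf u=\mathcal L\mathbf u$ of the patch scheme has a real symmetric (self-adjoint) matrix $\mathcal L$.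
   Context: Setup: $N$ patches indexed $I=1,\dots,N$ (indices taken cyclically modulo $N$, macroscale periodic domain), macroscale spacing $H$, each with $n$ interior points of spacing $d$, patch width $h=nd=rH$. Interior values $u^I_i(t)$, $i=1,\dots,n$, satisfy $d^2\partial_t u^I_i=\kappa^I_{i+\frac12}(u^I_{i+1}-u^I_i)+\kappa^I_{i-\frac12}(u^I_{i-1}-u^I_i)$ with real diffusivities satisfying $\kappa^I_{1/2}=\kappa^J_{n+1/2}$ for all $I,J$; $\mathbf u\in\mathbb R^{nN}$ collects all interior values. Operators act on the patch index: $E u^I_i=u^{I+1}_i$, $E^{-1}u^I_i=u^{I-1}_i$; $\mu\delta:=\tfrac12(E-E^{-1})$, $\delta^2:=E-2+E^{-1}$, and for $k\ge1$, $\mu\delta^{2k-1}:=\tfrac12(E-E^{-1})(E-2+E^{-1})^{k-1}$, $\delta^{2k}:=(E-2+E^{-1})^{k}$. *)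

(* Defs.v *)
From HB Require Import structures.
From mathcomp Require Import all_boot all_order all_algebra.
Set Implicit Arguments. Unset Strict Implicit. Unset Printing Implicit Defensive.
Import Order.TTheory GRing.Theory Num.Theory.
Local Open Scope ring_scope.

Section PatchDefs.
Variable R : realFieldType.
Variable N : nat.

(* Shift operators on the patch index (cyclic, macroscale periodic):
   (E *m w) I = w (I+1),  (Einv *m w) I = w (I-1). *)
Definition Emx : 'M[R]_N := \matrix_(I, J) ((J == ordS I)%:R : R).
Definition Einvmx : 'M[R]_N := \matrix_(I, J) ((J == ord_pred I)%:R : R).

Definition delta2 : 'M[R]_N := Emx - 2%:M + Einvmx.
(* mu delta^{2k-1} = 1/2 (E - E^{-1}) (E - 2 + E^{-1})^{k-1}, k >= 1 *)
Definition mudelta_odd (k : nat) : 'M[R]_N :=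
  ((1 / 2 : R) *: (Emx - Einvmx)) *m (delta2 ^+ k.-1).
Definition delta_even (k : nat) : 'M[R]_N := delta2 ^+ k.

Definition interp_coef (r : R) (k : nat) : R :=
  (\prod_(l < k) (r ^+ 2 - (l%:R) ^+ 2)) / ((2 * k)`!)%:R.

Definition Inn1 (P : nat) (r : R) : 'M[R]_N :=
  1%:M + \sum_(1 <= k < P.+1)
     interp_coef r k *: (((2 * k)%:R / r) *: mudelta_odd k + delta_even k).
Definition I1n (P : nat) (r : R) : 'M[R]_N :=
  1%:M + \sum_(1 <= k < P.+1)
     interp_coef r k *: (- (((2 * k)%:R / r) *: mudelta_odd k) + delta_even k).

Variable n : nat.

(* value u^I_m for paper index m in 1..n (interior point i : 'I_n has m = i+1) *)
Definition val_at (u : 'I_N -> 'I_n -> R) (I : 'I_N) (m : nat) : R :=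
  \sum_(i < n | i.+1 == m) u I i.

Definition ext_val (P : nat) (r : R) (u : 'I_N -> 'I_n -> R) (I : 'I_N) (m : nat) : R :=
  if m == 0%N then \sum_J I1n P r I J * val_at u J n
  else if m == n.+1 then \sum_J Inn1 P r I J * val_at u J 1
  else val_at u I m.

(* kappa I j = kappa^I_{j+1/2}, j = 0..n.
   Right-hand side of d_t u^I_i (paper index m = i+1):
   d^{-2} [kappa^I_{m+1/2}(u_{m+1}-u_m) + kappa^I_{m-1/2}(u_{m-1}-u_m)] *)
Definition patch_rhs (P : nat) (r d : R) (kappa : 'I_N -> nat -> R)
    (u : 'I_N -> 'I_n -> R) (I : 'I_N) (i : 'I_n) : R :=
  let m := i.+1 in
  (kappa I m * (ext_val P r u I m.+1 - ext_val P r u I m)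
   + kappa I i * (ext_val P r u I i - ext_val P r u I m)) / d ^+ 2.

Definition unit_vec (J : 'I_N) (j : 'I_n) : 'I_N -> 'I_n -> R :=
  fun K k => ((K == J) && (k == j))%:R.

Definition Lmat (P : nat) (r d : R) (kappa : 'I_N -> nat -> R)
    (I : 'I_N) (i : 'I_n) (J : 'I_N) (j : 'I_n) : R :=
  patch_rhs P r d kappa (unit_vec J j) I i.

End PatchDefs.

(* Main.v *)
Require Import Defs.
From HB Require Import structures.
From mathcomp Require Import all_boot all_order all_algebra.
From mathcomp Require Import ring lra.
Import Order.TTheory GRing.Theory Num.Theory.
Local Open Scope ring_scope.

Section S.
Variable R : realFieldType.
Variable N : nat.

Lemma trE : (Emx R N)^T = Einvmx R N.
Proof.
apply/matrixP => I J; rewrite !mxE.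
rewrite (_ : (I == ordS J) = (J == ord_pred I)) //.
by apply/eqP/eqP => [->|->]; [rewrite ordSK | rewrite ord_predK].
Qed.

Lemma trEinv : (Einvmx R N)^T = Emx R N.
Proof. by rewrite -trE trmxK. Qed.

Lemma EEinv : Emx R N *m Einvmx R N = 1%:M.
Proof.
apply/matrixP=> I K; rewrite !mxE (bigD1 (ordS I)) //= !mxE eqxx ordSK mul1r.
rewrite big1 ?addr0; first by rewrite eq_sym.
by move=> J /negbTE HJ; rewrite !mxE HJ mul0r.
Qed.

Lemma EinvE : Einvmx R N *m Emx R N = 1%:M.
Proof.
apply/matrixP=> I K; rewrite !mxE (bigD1 (ord_pred I)) //= !mxE eqxx ord_predK mul1r.
rewrite big1 ?addr0; first by rewrite eq_sym.
by move=> J /negbTE HJ; rewrite !mxE HJ mul0r.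
Qed.

Lemma tr_delta2 : (delta2 R N)^T = delta2 R N.
Proof.
rewrite /delta2 !linearD /= trE trEinv linearN /= tr_scalar_mx.
by rewrite addrC (addrC (Einvmx R N)) addrA.
Qed.

Lemma mulmx_powC (A : 'M[R]_N) k : A *m A ^+ k = A ^+ k *m A.
Proof. rewrite mulmxE. exact: (commrX k (commr_refl A)). Qed.

Lemma trX (A : 'M[R]_N) k : A^T = A -> (A ^+ k)^T = A ^+ k.
Proof.
move=> HA; elim: k => [|k IH]; first by rewrite expr0 trmx1.
rewrite exprSr -mulmxE trmx_mul IH HA.
exact: mulmx_powC.
Qed.

Lemma comm_d2 : GRing.comm (delta2 R N) (Emx R N - Einvmx R N).
Proof.
have cEEi : GRing.comm (Emx R N) (Einvmx R N).
  by rewrite /GRing.comm -!mulmxE EEinv EinvE.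
have cS : forall (a : R) (X : 'M[R]_N), GRing.comm (a%:M) X.
  by move=> a X; rewrite /GRing.comm -!mulmxE mul_scalar_mx mul_mx_scalar.
have cE : GRing.comm (Emx R N - Einvmx R N) (Emx R N).
  by apply: commr_sym; apply: commrB; [exact: commr_refl|exact: cEEi].
have cEi : GRing.comm (Emx R N - Einvmx R N) (Einvmx R N).
  by apply: commr_sym; apply: commrB; [apply: commr_sym; exact: cEEi|exact: commr_refl].
have c2 : GRing.comm (Emx R N - Einvmx R N) (2%:M).
  by apply: commr_sym; exact: cS.
apply: commr_sym; rewrite /delta2.
apply: commrD => //; exact: commrB.
Qed.
Lemma comm_pow_d2 m : (Emx R N - Einvmx R N) *m (delta2 R N ^+ m)
   = (delta2 R N ^+ m) *m (Emx R N - Einvmx R N).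
Proof. rewrite mulmxE. exact: (commrX m (commr_sym comm_d2)). Qed.

Lemma tr_mud k : (mudelta_odd R N k)^T = - mudelta_odd R N k.
Proof.
rewrite /mudelta_odd trmx_mul (trX _ _ tr_delta2) linearZ /= linearB /= trE trEinv.
rewrite (_ : Einvmx R N - Emx R N = -(Emx R N - Einvmx R N)); last by rewrite opprB.
by rewrite scalerN mulmxN -scalemxAr -scalemxAl comm_pow_d2.
Qed.

Lemma tr_Inn1 P (r : R) : (Inn1 N P r)^T = I1n N P r.
Proof.
rewrite /Inn1 /I1n linearD /= trmx1 linear_sum /=; congr (_ + _).
apply: eq_bigr => k _.
by rewrite linearZ /= linearD /= linearZ /= tr_mud /delta_even (trX _ _ tr_delta2) scalerN.
Qed.

Lemma part1 P (r : R) (I J : 'I_N) : Inn1 N P r I J = I1n N P r J I.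
Proof. by have := congr1 (fun M : 'M[R]_N => M J I) (tr_Inn1 P r); rewrite mxE => <-. Qed.
End S.

Section S2.
Variable R : realFieldType.
Variables (N n P : nat) (d r : R) (kappa : 'I_N -> nat -> R).
Hypothesis hk : forall I J : 'I_N, kappa I 0%N = kappa J n.

Definition Af (I : 'I_N) (i : 'I_n) (J : 'I_N) (j : 'I_n) : R :=
  if i.+1 == n then Inn1 N P r I J * (nat_of_ord j == 0%N)%:R
  else ((I == J) && (nat_of_ord j == i.+1))%:R.
Definition Bf (I : 'I_N) (i : 'I_n) (J : 'I_N) (j : 'I_n) : R :=
  if nat_of_ord i == 0%N then I1n N P r I J * (j.+1 == n)%:R
  else ((I == J) && (j.+1 == nat_of_ord i))%:R.
Definition Df (I : 'I_N) (i : 'I_n) (J : 'I_N) (j : 'I_n) : R :=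
  ((I == J) && (nat_of_ord j == nat_of_ord i))%:R.

Lemma keyA (I : 'I_N) (i : 'I_n) (J : 'I_N) (j : 'I_n) : kappa I i.+1 * Af I i J j = kappa J j * Bf J j I i.
Proof.
rewrite /Af /Bf.
case hi: (i.+1 == n); case hj: (nat_of_ord j == 0%N).
- by rewrite (eqP hi) (eqP hj) (hk J I) part1.
- by rewrite (eqP hi) (gtn_eqF (ltn_ord j)) andbF !mulr0.
- by rewrite (eqP hj) /= andbF !mulr0.
- rewrite (eq_sym J I) (eq_sym i.+1 j).
  case: eqP => [<-|_]; case: eqP => [->|_] //=; by rewrite ?mulr0.
Qed.

Lemma Dsym (I : 'I_N) (i : 'I_n) (J : 'I_N) (j : 'I_n) : (kappa I i.+1 + kappa I i) * Df I i J j
   = (kappa J j.+1 + kappa J j) * Df J j I i.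
Proof.
rewrite /Df (eq_sym J I) (eq_sym (i : nat) j).
case: eqP => [<-|_]; case: eqP => [/val_inj->|_] //=; by rewrite ?mulr0.
Qed.

Lemma final_sym (I : 'I_N) (i : 'I_n) (J : 'I_N) (j : 'I_n) :
  (kappa I i.+1 * (Af I i J j - Df I i J j) + kappa I i * (Bf I i J j - Df I i J j)) / d ^+ 2
  = (kappa J j.+1 * (Af J j I i - Df J j I i) + kappa J j * (Bf J j I i - Df J j I i)) / d ^+ 2.
Proof.
congr (_ / _).
have e1 := keyA I i J j. have e2 := keyA J j I i. have e3 := Dsym I i J j.
rewrite !mulrBr e1 e2. rewrite mulrDl mulrDl in e3. lra.
Qed.

Lemma val_unit (J : 'I_N) (j : 'I_n) (K : 'I_N) (m : nat) :
  val_at (unit_vec R J j) K m = ((K == J) && (j.+1 == m))%:R.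
Proof.
rewrite /val_at /unit_vec; case: (boolP (j.+1 == m)) => hm.
- rewrite (bigD1 j) //= eqxx andbT big1 ?addr0; first by [].
  by move=> k /andP[_ hk']; rewrite (negbTE hk') andbF.
- rewrite andbF big1 // => k hkm.
  have -> : (k == j) = false by apply/eqP => ekj; move: hm; rewrite -ekj hkm.
  by rewrite andbF.
Qed.

Lemma sum_I (M : 'M[R]_N) (I J : 'I_N) (b : bool) :
  \sum_K M I K * ((K == J) && b)%:R = M I J * b%:R.
Proof.
rewrite (bigD1 J) //= eqxx big1 ?addr0 // => K /negbTE ->; by rewrite mulr0.
Qed.

Lemma sum_val (M : 'M[R]_N) (I J : 'I_N) (j : 'I_n) m :
  \sum_K M I K * val_at (unit_vec R J j) K m = M I J * (j.+1 == m)%:R.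
Proof. under eq_bigr => K _ do rewrite val_unit. exact: sum_I. Qed.

Lemma Lmat_eq (I : 'I_N) (i : 'I_n) (J : 'I_N) (j : 'I_n) :
  Lmat P r d kappa I i J j =
  (kappa I i.+1 * (Af I i J j - Df I i J j) + kappa I i * (Bf I i J j - Df I i J j)) / d ^+ 2.
Proof.
rewrite /Lmat /patch_rhs /ext_val /=.
rewrite !eqSS (ltn_eqF (ltn_ord i)) (ltn_eqF (leqW (ltn_ord i))).
rewrite !sum_val !val_unit /Af /Bf /Df.
by rewrite !eqSS.
Qed.

Lemma part2 (I J : 'I_N) (i j : 'I_n) :
  Lmat P r d kappa I i J j = Lmat P r d kappa J j I i.
Proof. by rewrite !Lmat_eq final_sym. Qed.
End S2.

Theorem lemma2 (R : realFieldType) (N n P : nat) (H d r : R)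
    (kappa : 'I_N -> nat -> R) :
  (0 < N)%N -> (0 < n)%N -> (1 <= P)%N ->
  0 < H -> 0 < d -> r = n%:R * d / H -> 0 < r -> r <= 1 ->
  (forall I J : 'I_N, kappa I 0%N = kappa J n) ->
  (forall I J : 'I_N, Inn1 N P r I J = I1n N P r J I) /\
  (forall (I J : 'I_N) (i j : 'I_n),
      Lmat P r d kappa I i J j = Lmat P r d kappa J j I i).
Proof.
move=> _ _ _ _ _ _ _ _ hk; split.
- by move=> I J; exact: part1.
- by move=> I J i j; exact: (@part2 R N n P d r kappa hk I J i j).
Qed.
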